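(* Let $(\mathsf{E},\mathcal{F},\mu)$ be a probability space and let $P_{1}$ and $(P_{2,\iota})_{\iota>0}$ be $\mu$-invariant Markov kernels. Let $\Phi:\mathrm{L}^{2}(\mu)\to[0,\infty]$ with $a:=\sup_{f\in\mathrm{L}_{0}^{2}(\mu)\setminus\{0\}}\|f\|_{2}^{2}/\Phi(f)\in(0,\infty)$ satisfy $\Phi(cf)=c^{2}\Phi(f)$, $\|f-\mu(f)\|_{2}^{2}\le a\Phi(f-\mu(f))$ and non-expansivity $\Phi(T^{n}f)\le\Phi(f)$ for $T\in\{P_{1}\}\cup\{P_{2,\iota}\}_{\iota>0}$. Assume $P_{1}$ satisfies a super-Poincaré inequality with function $\beta_{1}$ and that for every $\iota>0$, \[ \|f\|_{2}^{2}\le s\,\mathcal{E}(P_{2,\iota}^{*}P_{2,\iota},f)+\beta_{2,\iota}(s)\Phi(f)\qquad\forall s>0,\ f\in\mathrm{L}_{0}^{2}(\mu), \] where $\beta_{1},\beta_{2,\iota}:(0,\infty)\to[0,\infty)$ are decreasing and tend to $0$ at $\infty$. For $\beta\in\{\beta_{1},\beta_{2,\iota}\}$ let $K(u)=u\beta(1/u)$, $K(0)=0$, $K^{*}(v)=\sup_{u\ge0}\{uv-K(u)\}$, $F(x)=\int_{x}^{a}\mathrm{d}v/K^{*}(v)$ for $x\in(0,a]$, giving $F_{1}$ and $F_{2,\iota}$, with inverses $F_{1}^{-1},F_{2,\iota}^{-1}:[0,\infty)\to(0,a]$ (so $F^{-1}(0)=a$). Assume that $\beta_{2,\iota}\ge\beta_{1}$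 pointwise for every $\iota>0$ and that $\lim_{\iota\to0}\beta_{2,\iota}(s)=\beta_{1}(s)$ for every $s>0$. Then for every $\iota>0$ and $n\in\mathbb{N}$, $F_{2,\iota}^{-1}(n)\ge F_{1}^{-1}(n)$, and \[ \lim_{\iota\to0}\sup_{n\ge0}\big\{F_{2,\iota}^{-1}(n)-F_{1}^{-1}(n)\big\}=0. \]
   Context: A kernel $P$ satisfies a super-Poincaré inequality with function $\beta$ (decreasing, $\beta(s)\downarrow0$) if $\|f\|_{2}^{2}\le s\,\mathcal{E}(P^{*}P,f)+\beta(s)\Phi(f)$ for all $s>0$, $f\in\mathrm{L}_{0}^{2}(\mu)$. $\mathcal{E}(T,f)=\langle(\mathrm{Id}-T)f,f\rangle$ in $\mathrm{L}^{2}(\mu)$, $P^{*}$ is the adjoint, and $\mathrm{L}_{0}^{2}(\mu)$ is the mean-zero subspace. *)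

(* Defs.v *)
From HB Require Import structures.
From mathcomp Require Import all_boot all_order all_algebra.
From mathcomp Require Import all_classical all_reals all_analysis.
Set Implicit Arguments. Unset Strict Implicit. Unset Printing Implicit Defensive.
Import Order.TTheory GRing.Theory Num.Theory.
Import numFieldNormedType.Exports.
Local Open Scope classical_set_scope.
Local Open Scope ring_scope.

Section L2defs.
Context {d : measure_display} {T : measurableType d} {R : realType}.
Variable mu : probability T R.

(* the set L^2(mu) (functions, not classes) *)
Definition L2 : set (T -> R) :=
  [set f : T -> R | measurable_fun setT f /\
           mu.-integrable setT (fun x => ((f x) ^+ 2)%:E)].

Definition norm2sq (f : T -> R) : R := fine (\int[mu]_x ((f x) ^+ 2)%:E)%E.

Definition mean (f : T -> R) : R := fine (\int[mu]_x (f x)%:E)%E.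

Definition L20 : set (T -> R) := [set f : T -> R | L2 f /\ mean f = 0].

Definition kop (P : R.-pker T ~> T) (f : T -> R) : T -> R :=
  fun x => fine (\int[P x]_y (f y)%:E)%E.

Definition mu_invariant (P : R.-pker T ~> T) : Prop :=
  forall A, measurable A -> (\int[mu]_x (P x A) = mu A)%E.

(* E(P^* P, f) = <(Id - P^*P) f, f> = ||f||^2 - <P f, P f> *)
Definition dirichlet_PstarP (P : R.-pker T ~> T) (f : T -> R) : R :=
  norm2sq f - norm2sq (kop P f).

Definition superPoincare (P : R.-pker T ~> T) (Phi : (T -> R) -> \bar R)
    (beta : R -> R) : Prop :=
  forall s, 0 < s -> forall f, L20 f ->
    ((norm2sq f)%:E <= (s * dirichlet_PstarP P f)%:E + (beta s)%:E * Phi f)%E.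

End L2defs.

Section Fdefs.
Context {R : realType}.

Definition Kfun (beta : R -> R) (u : R) : R :=
  if u == 0 then 0 else u * beta (u^-1).

Definition Kstar (beta : R -> R) (v : R) : \bar R :=
  ereal_sup [set ((u * v - Kfun beta u)%:E) | u in [set u : R | 0 <= u]].

Definition Ffun (a : R) (beta : R -> R) (x : R) : \bar R :=
  (\int[lebesgue_measure]_(v in `[x, a]) (Kstar beta v)^-1)%E.

Definition Finv (a : R) (beta : R -> R) (y : R) : R :=
  inf [set x : R | 0 < x <= a /\ (Ffun a beta x <= y%:E)%E].

End Fdefs.

(* Main.v *)
Require Import Defs.
From HB Require Import structures.
From mathcomp Require Import all_boot all_order all_algebra.
From mathcomp Require Import all_classical all_reals all_analysis.
From mathcomp Require Import measurable_realfun.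
From mathcomp.algebra_tactics Require Import ring lra.
From mathcomp Require Import zify.
Import Order.TTheory GRing.Theory Num.Theory.
Import numFieldNormedType.Exports.
Local Open Scope classical_set_scope.
Local Open Scope ring_scope.

Section Kstar_lemmas.
Context {R : realType}.
Implicit Types (beta : R -> R).

Lemma Kfun0 beta : Kfun beta 0 = 0.
Proof. by rewrite /Kfun eqxx. Qed.

Lemma Kstar_lb beta u v : 0 <= u -> ((u * v - Kfun beta u)%:E <= Kstar beta v)%E.
Proof. by move=> u0; apply: ereal_sup_ubound; exists u. Qed.

Lemma Kstar_ge0 beta v : (0 <= Kstar beta v)%E.
Proof. by have := Kstar_lb beta 0 v (lexx 0); rewrite Kfun0 mul0r subr0. Qed.

Lemma Kstar_nd beta v w : v <= w -> (Kstar beta v <= Kstar beta w)%E.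
Proof.
move=> vw; apply: ge_ereal_sup => _ [u u0 <-].
apply: le_trans (Kstar_lb beta u w u0); rewrite lee_fin lerD2r.
by rewrite ler_wpM2l.
Qed.

Lemma Kstar_gt beta v (t : R) : (t%:E < Kstar beta v)%E ->
  exists2 u, 0 <= u & t < u * v - Kfun beta u.
Proof.
by move=> /ereal_sup_gt[_ [u u0 <-]]; rewrite lte_fin => ?; exists u.
Qed.

Lemma Kstar_gt0 beta v s : 0 < s -> beta s < v -> (0 < Kstar beta v)%E.
Proof.
move=> s0 bs; apply: (lt_le_trans _ (Kstar_lb beta (s^-1) v _)); last first.
  by rewrite ltW // invr_gt0.
rewrite lte_fin /Kfun invr_eq0 gt_eqF // invrK -mulrBr mulr_gt0 ?invr_gt0 //.
by rewrite subr_gt0.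
Qed.

Lemma Kstar_anti beta1 beta2 v : (forall s, 0 < s -> beta1 s <= beta2 s) ->
  (Kstar beta2 v <= Kstar beta1 v)%E.
Proof.
move=> b12; apply: ge_ereal_sup => _ [u u0 <-].
apply: le_trans (Kstar_lb beta1 u v u0); rewrite lee_fin lerD2l lerN2 /Kfun.
case: ifPn => // un0.
by rewrite ler_wpM2l // b12 // invr_gt0 lt_neqAle eq_sym un0 u0.
Qed.

Lemma Kstar_fin beta v t : 0 <= v -> 0 < t -> v < beta t ->
  (forall s, 0 < s -> 0 <= beta s) ->
  (forall s r, 0 < s -> s <= r -> beta r <= beta s) ->
  (Kstar beta v <= (v / t)%:E)%E.
Proof.
move=> v0 t0 vb b0 bdec; apply: ge_ereal_sup => _ [u u0 <-]; rewrite lee_fin.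
rewrite /Kfun; case: ifPn => [/eqP ->|un0]; first by rewrite mul0r subr0 divr_ge0 // ltW.
have up : 0 < u by rewrite lt_neqAle eq_sym un0 u0.
have [ut|tu] := leP (t^-1) u.
  apply: le_trans (_ : 0 <= _); last by rewrite divr_ge0 // ltW.
  rewrite -mulrBr pmulr_rle0 // subr_le0 ltW // (lt_le_trans vb) // bdec ?invr_gt0 //.
  by rewrite -[t]invrK lef_pV2 ?posrE ?invr_gt0.
apply: (le_trans (y := u * v)).
  by rewrite lerBlDr lerDl mulr_ge0 // b0 // invr_gt0.
by rewrite mulrC ler_wpM2l // ltW.
Qed.

End Kstar_lemmas.

Section g_lemmas.
Context {R : realType}.
Implicit Types (beta : R -> R).
Local Open Scope ereal_scope.

Lemma g_ge0 beta v : 0 <= (Kstar beta v)^-1.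
Proof. by rewrite inve_ge0 Kstar_ge0. Qed.

Lemma g_ni beta (v w : R) : (v <= w)%R -> (Kstar beta w)^-1 <= (Kstar beta v)^-1.
Proof.
move=> vw; rewrite lee_pV2 ?Kstar_nd //; by rewrite inE /= ?Kstar_ge0.
Qed.

Lemma g_fin beta v : 0 < Kstar beta v -> (Kstar beta v)^-1 \is a fin_num.
Proof.
case: (Kstar beta v) => [r||] //; rewrite lte_fin => r0.
by rewrite inver gt_eqF.
Qed.

Lemma g_meas beta (x : R) : (forall v : R, (0 < v)%R -> 0 < Kstar beta v) ->
  (0 < x)%R -> measurable_fun `[x, +oo[ (fun v : R => (Kstar beta v)^-1 : \bar R).
Proof.
move=> Hpos x0.
pose phi v := fine ((Kstar beta (Num.max v x))^-1).
have mphi : measurable_fun `[x, +oo[ (EFin \o phi).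
  apply/measurable_EFinP; apply: measurable_realfun.nonincreasing_measurable => //.
  move=> v w vw; rewrite /phi; apply: fine_le.
  - by apply: g_fin; apply: Hpos; rewrite lt_max x0 orbT.
  - by apply: g_fin; apply: Hpos; rewrite lt_max x0 orbT.
  - by apply: g_ni; rewrite ge_max !le_max vw lexx !orbT.
apply: eq_measurable_fun mphi => v; rewrite inE /= in_itv /= andbT => xv.
rewrite /phi /= fineK; first by rewrite max_l.
by apply: g_fin; apply: Hpos; rewrite lt_max x0 orbT.
Qed.

End g_lemmas.

Section integral_lemmas.
Set Default Proof Using "All".
Context {R : realType}.
Local Open Scope ereal_scope.
Context (g : R -> \bar R)
  (Hg0 : forall v, 0 <= g v)
  (Hgn : forall v w : R, (v <= w)%R -> g w <= g v)
  (Hgm : forall x : R, (0 < x)%R -> measurable_fun `[x, +oo[ g)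
  (Hgf : forall v : R, (0 < v)%R -> g v \is a fin_num).

Lemma gmS (p : R) (D : set R) : (0 < p)%R -> D `<=` `[p, +oo[ -> measurable_fun D g.
Proof. by move=> p0 Dp; exact: (measurable_funS (measurable_itv _) Dp (Hgm p p0)). Qed.

Lemma I_split (p q r : R) : (0 < p)%R -> (p <= q)%R -> (q <= r)%R ->
  \int[lebesgue_measure]_(v in `[p, r]) g v =
  \int[lebesgue_measure]_(v in `[p, q[) g v + \int[lebesgue_measure]_(v in `[q, r]) g v.
Proof.
move=> p0 pq qr.
rewrite (@itv_bndbnd_setU _ _ (BLeft p) (BLeft q) (BRight r)); last 2 first.
  by rewrite bnd_simp. by rewrite bnd_simp.
apply: ge0_integral_setU => //.
- rewrite -itv_bndbnd_setU ?bnd_simp //.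
  by refine (gmS _ _ p0 _); apply: subset_itvl; rewrite bnd_simp.
- apply/disj_setPS => v [] /=; rewrite !in_itv /= => /andP[_ vq] /andP[qv _].
  by move: (lt_le_trans vq qv); rewrite ltxx.
Qed.

Lemma I_lb (p d : R) : (0 < p - d)%R -> (0 < d)%R ->
  ((fine (g p) * d)%R%:E <= \int[lebesgue_measure]_(v in `[(p - d)%R, p[) g v).
Proof.
move=> pd0 d0.
have p0 : (0 < p)%R by apply: lt_le_trans pd0 _; rewrite lerBlDr lerDl ltW.
have -> : ((fine (g p) * d)%R%:E = \int[lebesgue_measure]_(v in `[(p - d)%R, p[) (cst (fine (g p))%:E) v).
  rewrite integral_cst//= lebesgue_measure_itv /= lte_fin ltrBlDr ltrDl d0.
  by rewrite -EFinB opprB addrC subrK.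
apply: ge0_le_integral => //.
- by move=> v _; rewrite lee_fin fine_ge0.
- by refine (gmS _ _ pd0 _); apply: subset_itvl; rewrite bnd_simp.
- move=> v; rewrite /= in_itv /= => /andP[_ vp].
  by rewrite fineK ?Hgf // Hgn // ltW.
Qed.

Lemma I_ub (p q C : R) : (0 < p)%R -> (p <= q)%R ->
  (forall v, (p <= v)%R -> (v < q)%R -> g v <= C%:E) ->
  \int[lebesgue_measure]_(v in `[p, q[) g v <= (C * (q - p))%R%:E.
Proof.
move=> p0 pq gC.
apply: (@le_trans _ _ (\int[lebesgue_measure]_(v in `[p, q[) (cst C%:E) v)).
  apply: ge0_le_integral => //.
  - by refine (gmS _ _ p0 _); apply: subset_itvl; rewrite bnd_simp.
  - by move=> v; rewrite /= in_itv /= => /andP[pv vq]; apply: gC.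
rewrite integral_cst//= lebesgue_measure_itv /= lte_fin.
case: ltP => [_|qp]; first by rewrite -EFinM.
have -> : q = p by apply/eqP; rewrite eq_le pq qp.
by rewrite subrr mulr0 mule0.
Qed.

Lemma I_ge0 (D : set R) : 0 <= \int[lebesgue_measure]_(v in D) g v.
Proof. by apply: integral_ge0 => v _. Qed.

Lemma I_sub (p q r : R) : (0 < p)%R -> (p <= q)%R ->
  \int[lebesgue_measure]_(v in `[q, r]) g v <= \int[lebesgue_measure]_(v in `[p, r]) g v.
Proof.
move=> p0 pq; apply: ge0_subset_integral => //.
- by refine (gmS _ _ p0 _); apply: subset_itvl; rewrite bnd_simp.
- by apply: subset_itvr; rewrite bnd_simp.
Qed.

End integral_lemmas.

Lemma eadd_helper {R : realType} (B : \bar R) (x z w u : R) : (x + z <= w + u)%R ->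
  (x%:E + (B + z%:E) <= (w%:E + B) + u%:E)%E.
Proof.
move=> h; rewrite addeCA (addeC w%:E) -addeA; apply: leeD2l.
by rewrite -!EFinD lee_fin.
Qed.

Section chain.
Context {R : realType}.
Local Open Scope ereal_scope.
Lemma chain (g1 g2 : R -> \bar R)
  (H10 : forall v, 0 <= g1 v)
  (H1n : forall v w : R, (v <= w)%R -> g1 w <= g1 v)
  (H1m : forall x : R, (0 < x)%R -> measurable_fun `[x, +oo[ g1)
  (H1f : forall v : R, (0 < v)%R -> g1 v \is a fin_num)
  (H20 : forall v, 0 <= g2 v)
  (H2n : forall v w : R, (v <= w)%R -> g2 w <= g2 v)
  (H2m : forall x : R, (0 < x)%R -> measurable_fun `[x, +oo[ g2)
  (H2f : forall v : R, (0 < v)%R -> g2 v \is a fin_num)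
  (a d eta : R) (d0 : (0 < d)%R) (eta0 : (0 <= eta)%R)
  (m : nat) : (0 < a - m.+1%:R * d)%R ->
  (forall j : nat, (1 <= j <= m)%N -> g2 (a - j%:R * d)%R <= g1 (a - j%:R * d)%R + eta%:E) ->
  \int[lebesgue_measure]_(v in `[(a - m%:R * d)%R, a]) g2 v <=
  \int[lebesgue_measure]_(v in `[(a - m.+1%:R * d)%R, a]) g1 v + (m%:R * d * eta)%R%:E.
Proof.
elim: m => [|m IH] pos H.
  rewrite mul0r subr0 set_itv1 integral_set1 !mul0r.
  by rewrite adde0 (I_ge0 _ H10 H1n H1m H1f).
have eS : (m.+1%:R = m%:R + 1 :> R)%R by rewrite -addn1 natrD.
have eSS : (m.+2%:R = m%:R + 2 :> R)%R by rewrite -addn2 natrD.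
have eS' : (a - m.+1%:R * d = a - m%:R * d - d)%R by rewrite eS; ring.
have eSS' : (a - m.+2%:R * d = a - m%:R * d - d - d)%R by rewrite eSS; ring.
have ym : (0 <= m%:R * d)%R by rewrite mulr_ge0 // ltW.
have ya : (a - m%:R * d <= a)%R by lra.
have pos1 : (0 < a - m.+1%:R * d)%R by rewrite eS'; rewrite eSS' in pos; lra.
have H' : forall j : nat, (1 <= j <= m)%N ->
    g2 (a - j%:R * d)%R <= g1 (a - j%:R * d)%R + eta%:E.
  by move=> j /andP[j0 jm]; apply: H; rewrite j0 (leq_trans jm).
have {}IH := IH pos1 H'.
have Hm := H m.+1 (leqnn _); rewrite eS' in Hm.
rewrite eS' in IH.
rewrite eS' eSS' in pos *.
move: (a - m%:R * d)%R ya IH pos Hm => y ya IH pos Hm.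
have y'0 : (0 < y - d)%R by lra.
rewrite (I_split _ H20 H2n H2m H2f (y-d)%R y a) //; last by lra.
rewrite (I_split _ H10 H1n H1m H1f (y-d-d)%R (y-d)%R a) //; last 2 first.
  by lra. by lra.
set c := fine (g1 (y - d)%R).
have A2 : \int[lebesgue_measure]_(v in `[(y - d)%R, y[) g2 v <= ((c + eta) * (y - (y - d)))%R%:E.
  apply: (I_ub _ H20 H2n H2m H2f) => //; first by lra.
  move=> v yv vy; apply: le_trans (H2n _ _ yv) _; apply: le_trans Hm _.
  rewrite /c EFinD fineK ?H1f //.
have A1 : ((c * d)%R%:E <= \int[lebesgue_measure]_(v in `[(y - d - d)%R, (y - d)%R[) g1 v).
  exact: (I_lb _ H10 H1n H1m H1f (y-d)%R d).
apply: (le_trans (leeD A2 IH)).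
apply: (le_trans _ (leeD2r _ (leeD2r _ A1))).
apply: eadd_helper; rewrite eS; nra.
Qed.
End chain.

Lemma chain2 {R : realType} (g1 g2 : R -> \bar R)
  (H10 : forall v, (0 <= g1 v)%E)
  (H1n : forall v w : R, (v <= w)%R -> (g1 w <= g1 v)%E)
  (H1m : forall x : R, (0 < x)%R -> measurable_fun `[x, +oo[ g1)
  (H1f : forall v : R, (0 < v)%R -> g1 v \is a fin_num)
  (H20 : forall v, (0 <= g2 v)%E)
  (H2n : forall v w : R, (v <= w)%R -> (g2 w <= g2 v)%E)
  (H2m : forall x : R, (0 < x)%R -> measurable_fun `[x, +oo[ g2)
  (H2f : forall v : R, (0 < v)%R -> g2 v \is a fin_num)
  (a d eta : R) (d0 : (0 < d)%R) (eta0 : (0 <= eta)%R)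
  (m : nat) : (0 < a - m.+2%:R * d)%R ->
  (forall j : nat, (1 <= j <= m)%N -> (g2 (a - j%:R * d)%R <= g1 (a - j%:R * d)%R + eta%:E)%E) ->
  (m%:R * eta <= fine (g1 (a - d)%R))%R ->
  (\int[lebesgue_measure]_(v in `[(a - m%:R * d)%R, a]) g2 v <=
  \int[lebesgue_measure]_(v in `[(a - m.+2%:R * d)%R, a]) g1 v)%E.
Proof.
move=> pos H meta.
have eS : (m.+1%:R = m%:R + 1 :> R)%R by rewrite -addn1 natrD.
have eSS : (m.+2%:R = m%:R + 2 :> R)%R by rewrite -addn2 natrD.
have eSS' : (a - m.+2%:R * d = (a - m.+1%:R * d) - d)%R by rewrite eSS eS; ring.
have ym : (0 <= m%:R * d)%R by rewrite mulr_ge0 // ltW.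
have pos1 : (0 < a - m.+1%:R * d)%R by move: pos; rewrite eSS'; lra.
apply: (le_trans (@chain R g1 g2 H10 H1n H1m H1f H20 H2n H2m H2f a d eta d0 eta0 m pos1 H)).
rewrite eSS' in pos *.
have y'a : (a - m.+1%:R * d <= a - d)%R by rewrite eS; lra.
move: (a - m.+1%:R * d)%R pos pos1 y'a => y pos y0 ya.
rewrite (I_split _ H10 H1n H1m H1f (y-d)%R y a) //; last 2 first.
  by lra. by lra.
apply: (le_trans _ (leeD2r _ (I_lb _ H10 H1n H1m H1f y d pos d0))).
rewrite addeC; apply: leeD2r; rewrite lee_fin.
have : (fine (g1 (a - d)%R) <= fine (g1 y))%R.
  by apply: fine_le; [apply: H1f; lra|apply: H1f|apply: H1n].
rewrite -mulrA (mulrC d) mulrA => h.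
by rewrite ler_wpM2r ?(ltW d0) // (le_trans meta h).
Qed.

Lemma near_forall_le {T : Type} (F : set_system T) (FF : Filter F) (K : nat)
  (P : nat -> T -> Prop) :
  (forall j, (j <= K)%N -> \forall x \near F, P j x) ->
  \forall x \near F, forall j, (j <= K)%N -> P j x.
Proof.
elim: K => [|K IH] H.
  by apply: filterS (H 0%N (leqnn _)) => x Px j; rewrite leqn0 => /eqP ->.
apply: filterS2 (IH (fun j hj => H j (leqW hj))) (H K.+1 (leqnn _)) => x h1 h2 j.
by rewrite leq_eqVlt ltnS => /orP[/eqP ->|/h1].
Qed.

Section beta_lemmas.
Context {R : realType}.

Lemma beta_small (beta : R -> R) : beta x @[x --> +oo] --> 0%R ->
  forall v : R, (0 < v)%R -> exists2 s : R, (0 < s)%R & (beta s < v)%R.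
Proof.
move=> bc v v0.
have h : \forall t \near +oo, `|0 - beta t| < v by exact: cvgr_dist_lt.
have [s [s0 hs]] := filter_ex (filterS2 _ (fun x (a : (0 < x)%R) b => conj a b)
   (nbhs_pinfty_gt (num_real 0%R)) h).
by exists s => //; move: hs; rewrite sub0r normrN; apply: le_lt_trans; apply: ler_norm.
Qed.

Lemma Kpos (beta : R -> R) : beta x @[x --> +oo] --> 0%R ->
  forall v : R, (0 < v)%R -> (0 < Kstar beta v)%E.
Proof.
move=> bc v v0; have [s s0 bs] := @beta_small beta bc v v0.
exact: Kstar_gt0 _ _ _ s0 bs.
Qed.

Local Open Scope ereal_scope.

Lemma F_a (a : R) beta : Ffun a beta a = 0.
Proof. by rewrite /Ffun set_itv1 integral_set1. Qed.

Lemma Ffun_ge0 (a : R) beta x : 0 <= Ffun a beta x.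
Proof. by apply: integral_ge0 => v _; exact: g_ge0. Qed.

Definition Fset (a : R) beta (y : R) :=
  [set x : R | (0 < x <= a)%R /\ (Ffun a beta x <= y%:E)%E].

Lemma Fset_a (a y : R) beta : (0 < a)%R -> (0 <= y)%R -> Fset a beta y a.
Proof. by move=> a0 y0; split; [rewrite a0 lexx|rewrite F_a lee_fin]. Qed.

Lemma Fset_lb (a y : R) beta : lbound (Fset a beta y) 0%R.
Proof. by move=> x [/andP[x0 _] _]; apply: ltW. Qed.

Lemma Finv_ge0 (a y : R) beta : (0 < a)%R -> (0 <= y)%R -> (0 <= Finv a beta y)%R.
Proof.
by move=> a0 y0; apply: lb_le_inf; [exists a; exact: Fset_a|exact: Fset_lb].
Qed.

Lemma Finv_le (a y z : R) beta : Fset a beta y z -> (Finv a beta y <= z)%R.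
Proof.
move=> hz; apply: (ge_inf (E := Fset a beta y)) => //.
by exists 0%R; exact: Fset_lb.
Qed.

Lemma Finv_lea (a y : R) beta : (0 < a)%R -> (0 <= y)%R -> (Finv a beta y <= a)%R.
Proof. by move=> a0 y0; apply: Finv_le; exact: Fset_a. Qed.

Lemma Finv_adh (a y e : R) beta : (0 < a)%R -> (0 <= y)%R -> (0 < e)%R ->
  exists2 x, Fset a beta y x & (x < Finv a beta y + e)%R.
Proof.
move=> a0 y0 e0; apply: inf_adherent => //; split.
  by exists a; exact: Fset_a.
by exists 0%R; exact: Fset_lb.
Qed.

Lemma Finv_mono (a y : R) beta1 beta2 : (0 < a)%R -> (0 <= y)%R ->
  (forall x, (0 < x <= a)%R -> Ffun a beta1 x <= Ffun a beta2 x) ->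
  (Finv a beta1 y <= Finv a beta2 y)%R.
Proof.
move=> a0 y0 hF; apply: lb_le_inf; first by exists a; exact: Fset_a.
move=> x [hx Fx]; apply: Finv_le; split => //.
exact: le_trans (hF _ hx) Fx.
Qed.

End beta_lemmas.

Section conv_lemmas.
Context {R : realType}.

Lemma Ffun_mono (a : R) (b1 b2 : R -> R) :
  (forall v : R, (0 < v)%R -> (0 < Kstar b1 v)%E) ->
  (forall v : R, (0 < v)%R -> (0 < Kstar b2 v)%E) ->
  (forall s, 0 < s -> b1 s <= b2 s) ->
  forall x, 0 < x -> (Ffun a b1 x <= Ffun a b2 x)%E.
Proof.
move=> K1 K2 b12 x x0; apply: ge0_le_integral => //.
- by move=> v _; exact: g_ge0.
- refine (measurable_funS (measurable_itv _) _ (@g_meas _ b1 x K1 x0)).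
  by apply: subset_itvl; rewrite bnd_simp.
- refine (measurable_funS (measurable_itv _) _ (@g_meas _ b2 x K2 x0)).
  by apply: subset_itvl; rewrite bnd_simp.
- move=> v _; rewrite lee_pV2 ?inE /= ?Kstar_ge0 //.
  exact: Kstar_anti.
Qed.

Lemma exists_t (k : \bar R) (eta : R) : (0 < k)%E -> 0 < eta ->
  exists t : R, [/\ 0 < t, (t%:E < k)%E & ((t%:E)^-1 <= k^-1 + eta%:E)%E].
Proof.
case: k => [r||] // r0 eta0; last first.
  exists eta^-1; split; rewrite ?invr_gt0 ?ltey //.
  by rewrite invey add0e inver invr_eq0 gt_eqF // invrK.
rewrite lte_fin in r0.
have h0 : 0 < 1 + eta * r by rewrite addr_gt0 // mulr_gt0.
exists (r / (1 + eta * r)); split.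
- by rewrite divr_gt0.
- rewrite lte_fin ltr_pdivrMr // ltr_pMr // ltrDl mulr_gt0 //.
- rewrite !inver !gt_eqF ?divr_gt0 // -EFinD lee_fin invf_div.
  by rewrite le_eqVlt; apply/orP; left; apply/eqP; field; rewrite gt_eqF.
Qed.

End conv_lemmas.

Lemma g_conv {R : realType} (b1 : R -> R) (b2 : R -> R -> R) :
  (forall s, 0 < s -> b2 iota s @[iota --> 0^'+] --> b1 s) ->
  forall (y eta : R), 0 < y -> (0 < Kstar b1 y)%E -> 0 < eta ->
  \forall iota \near 0^'+,
    ((Kstar (b2 iota) y)^-1 <= (Kstar b1 y)^-1 + eta%:E)%E.
Proof.
move=> hconv y eta y0 Kp eta0.
have [t [t0 tK tinv]] := exists_t _ _ Kp eta0.
have [u u0 tu] := Kstar_gt _ _ _ tK.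
suff hK : \forall iota \near 0^'+, t < u * y - Kfun (b2 iota) u.
  apply: filterS hK => iota htu.
  apply: le_trans tinv; rewrite lee_pV2 ?inE /= ?Kstar_ge0 ?lee_fin ?(ltW t0) //.
  by apply: le_trans (Kstar_lb _ _ _ u0); rewrite lee_fin ltW.
have [u00|un0] := eqVneq u 0.
  by apply: nearW => iota; move: tu; rewrite u00 !Kfun0.
have up : 0 < u by rewrite lt_neqAle eq_sym un0 u0.
have hc : u * b2 iota u^-1 @[iota --> 0^'+] --> u * b1 u^-1.
  by apply: cvgMr; apply: hconv; rewrite invr_gt0.
have e0 : 0 < u * y - Kfun b1 u - t by rewrite subr_gt0.
apply: filterS (cvgr_dist_lt _ _ hc _ e0) => iota.
rewrite /Kfun (negbTE un0) => h.
have := ler_norm (u * b2 iota u^-1 - u * b1 u^-1).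
move: h; rewrite /Kfun (negbTE un0) distrC in e0 *; move=> h1 h2.
have := le_lt_trans h2 h1; clear.
move: (u * b1 u^-1) (u * b2 iota u^-1) (u * y) => A B C. lra.
Qed.

Lemma norm2sq_ge0 {d} {T : measurableType d} {R : realType} (mu : probability T R) f :
  0 <= norm2sq mu f.
Proof. by apply: fine_ge0; apply: integral_ge0 => x _; rewrite lee_fin sqr_ge0. Qed.

Lemma beta_big {d} {T : measurableType d} {R : realType} (mu : probability T R)
  (P1 : R.-pker T ~> T) (Phi : (T -> R) -> \bar R) (a : R) (beta1 : R -> R) :
  (forall f, L2 mu f -> (0 <= Phi f)%E) ->
  a%:E = ereal_sup [set ((norm2sq mu f)%:E / Phi f)%E |
                    f in [set f | L20 mu f /\ norm2sq mu f != 0]] ->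
  superPoincare mu P1 Phi beta1 ->
  forall v, 0 < v -> v < a -> exists2 s, 0 < s & v < beta1 s.
Proof.
move=> Phi0 ha SP v v0 va.
pose v' := (v + a) / 2.
have vv' : v < v' by rewrite /v'; lra.
have v'a : v' < a by rewrite /v'; lra.
have v'0 : 0 < v' by lra.
have : (v'%:E < a%:E)%E by rewrite lte_fin.
rewrite ha => /ereal_sup_gt[_ [f [L20f Nn0] <-]] hy.
set N := norm2sq mu f in Nn0 hy.
have N0 : 0 < N by rewrite lt_neqAle eq_sym Nn0 norm2sq_ge0.
pose r := v / v'.
have r0 : 0 < r by rewrite divr_gt0.
have r1 : r < 1 by rewrite ltr_pdivrMr // mul1r.
have ev : v = r * v' by rewrite /r divfK // gt_eqF.
have s0 : 0 < 1 - r by lra.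
exists (1 - r) => //.
rewrite ltNge; apply/negP => bs.
have := SP _ s0 f L20f.
have Q0 := norm2sq_ge0 mu (kop P1 f).
rewrite /dirichlet_PstarP -/N.
have := Phi0 f L20f.1.
case: (Phi f) hy => [p||] //; last first.
  by rewrite invey mule0 lte_fin ltNge (ltW v'0).
move=> hy p0 hsp; rewrite lee_fin in p0.
rewrite -EFinM -EFinD lee_fin in hsp.
have h1 : N <= (1 - r) * N + v * p.
  apply: le_trans hsp _; apply: lerD.
    by rewrite ler_wpM2l ?(ltW s0) // lerBlDr lerDl.
  by rewrite ler_wpM2r.
have h2 : N <= v' * p.
  have : r * N <= r * (v' * p) by rewrite mulrA -ev; lra.
  by rewrite ler_pM2l.
move: hy h2; have [->|pn0] := eqVneq p 0.
  by rewrite mulr0 => _ h2; have := lt_le_trans N0 h2; rewrite ltxx.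
move=> + h2; rewrite inver (negbTE pn0) -EFinM lte_fin ltr_pdivlMr; last first.
  by rewrite lt_neqAle eq_sym pn0 p0.
by rewrite ltNge h2.
Qed.

Lemma main_conv {R : realType} (a : R) (beta1 : R -> R) (beta2 : R -> R -> R) :
  0 < a ->
  (forall v : R, 0 < v -> (0 < Kstar beta1 v)%E) ->
  (forall iota, 0 < iota -> forall v : R, 0 < v -> (0 < Kstar (beta2 iota) v)%E) ->
  (forall v, 0 < v -> v < a -> exists2 s, 0 < s & v < beta1 s) ->
  (forall s, 0 < s -> 0 <= beta1 s) ->
  (forall s t, 0 < s -> s <= t -> beta1 t <= beta1 s) ->
  (forall s, 0 < s -> beta2 iota s @[iota --> 0^'+] --> beta1 s) ->
  forall e, 0 < e ->
  \forall iota \near 0^'+, 0 < iota /\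
    forall n : nat, Finv a (beta2 iota) n%:R <= Finv a beta1 n%:R + e.
Proof.
move=> a0 K1p K2p big b10 b1dec bconv e e0.
pose K := (Num.trunc (4 * a / e)).+2.
have K0 : (0 < K%:R :> R) by rewrite ltr0n.
pose dl := a / K%:R.
have dl0 : 0 < dl by rewrite divr_gt0.
have dlK : dl * K%:R = a by rewrite /dl divfK // gt_eqF.
have dle : 4 * dl <= e.
  have x0 : 0 <= 4 * a / e by rewrite divr_ge0 ?mulr_ge0 // ltW.
  have /andP[_ h] := truncn_itv x0; have hK : (4 * a / e < K%:R) by apply: lt_le_trans h _; rewrite ler_nat.
  rewrite ltr_pdivrMr // in hK.
  rewrite -(ler_pM2r K0) -mulrA dlK; lra.
have dla : 2 * dl <= a.
  rewrite -dlK mulrC; apply: ler_wpM2l; first exact: ltW.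
  by rewrite ler_nat.
pose g1 := fun v => ((Kstar beta1 v)^-1)%E.
have [s s0 hs] : exists2 s, 0 < s & a - dl < beta1 s by apply: big; lra.
have Kfin : (Kstar beta1 (a - dl) <= ((a - dl) / s)%:E)%E.
  by apply: Kstar_fin => //; lra.
have Kp : (0 < Kstar beta1 (a - dl))%E by apply: K1p; lra.
have [gam gam0 hgam] : exists2 gam, 0 < gam & g1 (a - dl) = gam%:E.
  rewrite /g1; move: Kfin Kp; case: (Kstar beta1 (a - dl)) => [r||] //.
  rewrite lte_fin => _ r0; exists r^-1; first by rewrite invr_gt0.
  by rewrite inver gt_eqF.
pose eta := gam / K%:R.
have eta0 : 0 < eta by rewrite divr_gt0.
have ev : \forall iota \near 0^'+, forall j, (j <= K)%N -> (1 <= j)%N -> (j < K)%N ->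
    ((Kstar (beta2 iota) (a - j%:R * dl)%R)^-1 <= g1 (a - j%:R * dl)%R + eta%:E)%E.
  apply: near_forall_le => j jK.
  have [/andP[j1 jlt]|hj] := boolP ((1 <= j) && (j < K))%N.
    have y0 : 0 < a - j%:R * dl.
      rewrite subr_gt0 -[X in _ < X]dlK mulrC ltr_pM2l // ltr_nat //.
    by apply: filterS (g_conv _ _ bconv _ _ y0 (K1p _ y0) eta0) => iota h _ _.
  by apply: nearW => iota j1 jlt; move: hj; rewrite j1 jlt.
apply: filterS2 ev (nbhs_right_gt 0) => iota hev i0; split => // n.
have y0 : 0 <= (n%:R : R) by [].
have [hx|hx] := leP a (Finv a beta1 n%:R + e).
  exact: le_trans (Finv_lea _ _ _ a0 y0) hx.
have [x [/andP[x0 xa] Fx] xlt] := Finv_adh _ _ _ beta1 a0 y0 dl0.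
move: (Finv a beta1 n%:R) hx xlt => x1 hx xlt.
have ax : 3 * dl < a - x by lra.
pose k := Num.trunc ((a - x) / dl).
have kx0 : 0 <= (a - x) / dl by rewrite divr_ge0 ?subr_ge0 // ltW.
have /andP[k1 k2] := truncn_itv kx0.
rewrite ler_pdivlMr // in k1; rewrite ltr_pdivrMr // in k2.
rewrite -/k in k1 k2.
have k3 : (3 < k.+1)%N.
  by rewrite -(ltr_nat R) -(ltr_pM2r dl0); apply: lt_trans ax k2.
have kK : (k < K)%N.
  by rewrite -(ltr_nat R) -(ltr_pM2r dl0) [K%:R * _]mulrC dlK; apply: le_lt_trans k1 _; lra.
have [m km] : exists m, k = m.+2 by move: k3; case: (k) => [|[|m]] // _; exists m.
rewrite km in k1 k2 kK.
have eSS : (m.+2%:R = m%:R + 2 :> R) by rewrite -addn2 natrD.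
have eS3 : (m.+3%:R = m%:R + 3 :> R) by rewrite -addn3 natrD.
have md0 : 0 <= m%:R * dl by rewrite mulr_ge0 // ltW.
have pos : 0 < a - m.+2%:R * dl by lra.
have H2 : forall j : nat, (1 <= j <= m)%N ->
    ((Kstar (beta2 iota) (a - j%:R * dl)%R)^-1 <= g1 (a - j%:R * dl)%R + eta%:E)%E.
  move=> j /andP[j1 jm].
  have jK : (j < K)%N by move: jm kK; clear; lia.
  by apply: hev => //; exact: ltnW.
have meta : m%:R * eta <= fine (g1 (a - dl)).
  rewrite hgam /= /eta mulrA ler_pdivrMr // mulrC ler_pM2l // ler_nat.
  by move: kK; clear; lia.
have hc := chain2 g1 (fun v => (Kstar (beta2 iota) v)^-1)%E (g_ge0 beta1) (g_ni beta1) (fun x => g_meas beta1 x K1p)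
  (fun v v0 => g_fin beta1 v (K1p v v0))
  (g_ge0 (beta2 iota)) (g_ni (beta2 iota)) (fun x => g_meas (beta2 iota) x (K2p _ i0))
  (fun v v0 => g_fin (beta2 iota) v (K2p _ i0 v v0))
  a dl eta dl0 (ltW eta0) m pos H2 meta.
have hF : (Ffun a (beta2 iota) (a - m%:R * dl) <= (n%:R)%:E)%E.
  apply: le_trans hc _; apply: le_trans Fx.
  apply: (I_sub _ (g_ge0 beta1) (g_ni beta1) (fun x => g_meas beta1 x K1p)
    (fun v v0 => g_fin beta1 v (K1p v v0))) => //.
  lra.
have hz : Fset a (beta2 iota) n%:R (a - m%:R * dl) by split => //; apply/andP; split; lra.
apply: le_trans (Finv_le _ _ _ _ hz) _.
lra.
Qed.

Theorem proposition41 (d : measure_display) (T : measurableType d)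
  (R : realType) (mu : probability T R)
  (P1 : R.-pker T ~> T) (P2 : R -> R.-pker T ~> T)
  (Phi : (T -> R) -> \bar R) (a : R)
  (beta1 : R -> R) (beta2 : R -> R -> R) :
  mu_invariant mu P1 ->
  (forall iota, 0 < iota -> mu_invariant mu (P2 iota)) ->
  (* Phi : L^2(mu) -> [0, oo] *)
  (forall f, L2 mu f -> (0 <= Phi f)%E) ->
  (* a = sup_{f in L^2_0 \ {0}} ||f||^2 / Phi(f), and 0 < a < oo *)
  0 < a ->
  a%:E = ereal_sup [set ((norm2sq mu f)%:E / Phi f)%E |
                    f in [set f | L20 mu f /\ norm2sq mu f != 0]] ->
  (* 2-homogeneity *)
  (forall c f, L2 mu f -> Phi (fun x => c * f x) = ((c ^+ 2)%:E * Phi f)%E) ->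
  (forall f, L2 mu f ->
     ((norm2sq mu (fun x => (f x - mean mu f)%R))%:E
        <= a%:E * Phi (fun x => (f x - mean mu f)%R))%E) ->
  (* non-expansivity *)
  (forall n f, L2 mu f -> (Phi (iter n (kop P1) f) <= Phi f)%E) ->
  (forall iota, 0 < iota -> forall n f, L2 mu f ->
     (Phi (iter n (kop (P2 iota)) f) <= Phi f)%E) ->
  (* super-Poincare inequalities *)
  superPoincare mu P1 Phi beta1 ->
  (forall iota, 0 < iota -> superPoincare mu (P2 iota) Phi (beta2 iota)) ->
  (* beta1, beta2 iota : (0,oo) -> [0,oo) decreasing, tending to 0 at oo *)
  (forall s, 0 < s -> 0 <= beta1 s) ->
  (forall s t, 0 < s -> s <= t -> beta1 t <= beta1 s) ->
  beta1 x @[x --> +oo] --> 0 ->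
  (forall iota, 0 < iota -> forall s, 0 < s -> 0 <= beta2 iota s) ->
  (forall iota, 0 < iota -> forall s t, 0 < s -> s <= t ->
     beta2 iota t <= beta2 iota s) ->
  (forall iota, 0 < iota -> beta2 iota x @[x --> +oo] --> 0) ->
  (* comparison and convergence of the beta's *)
  (forall iota, 0 < iota -> forall s, 0 < s -> beta1 s <= beta2 iota s) ->
  (forall s, 0 < s -> beta2 iota s @[iota --> 0^'+] --> beta1 s) ->
  (forall iota, 0 < iota -> forall n : nat,
     Finv a beta1 n%:R <= Finv a (beta2 iota) n%:R) /\
  sup [set Finv a (beta2 iota) n%:R - Finv a beta1 n%:R | n in [set: nat]]
    @[iota --> 0^'+] --> 0.
Proof.
move=> inv1 inv2 Phi0 a0 ha hom hvar ne1 ne2 SP1 SP2 b10 b1dec b1cvg b20 b2dec b2cvg b12 bconv.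
have K1p := Kpos _ b1cvg.
have K2p : forall iota, 0 < iota -> forall v, 0 < v -> (0 < Kstar (beta2 iota) v)%E.
  by move=> iota i0; exact: Kpos _ (b2cvg iota i0).
have big := beta_big _ _ _ _ _ Phi0 ha SP1.
have part1 : forall iota, 0 < iota -> forall n : nat,
    Finv a beta1 n%:R <= Finv a (beta2 iota) n%:R.
  move=> iota i0 n; apply: Finv_mono => // x /andP[x0 _].
  exact: (Ffun_mono _ _ _ K1p (K2p _ i0) (b12 _ i0) x x0).
split => //.
apply/cvgrPdist_le => e e0.
apply: filterS (main_conv _ _ _ a0 K1p K2p big b10 b1dec bconv e e0) => iota [i0 hn].
set S := [set _ | n in _].
have Sne : S !=set0.
  by exists (Finv a (beta2 iota) 0%:R - Finv a beta1 0%:R); exists 0%N.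
have Sub : ubound S a.
  move=> _ [n _ <-].
  have := Finv_lea _ _ (beta2 iota) a0 (ler0n R n).
  have := Finv_ge0 _ _ beta1 a0 (ler0n R n).
  lra.
have S0 : 0 <= sup S.
  have hub : has_ubound S by exists a.
  have h0 : S (Finv a (beta2 iota) 0%:R - Finv a beta1 0%:R) by exists 0%N.
  apply: le_trans (ub_le_sup hub h0).
  by rewrite subr_ge0 part1.
have Se : sup S <= e.
  by apply: ge_sup => // _ [n _ <-]; have := hn n; lra.
by rewrite sub0r normrN ger0_norm.
Qed.
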